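(* Suppose the weights $w^{(1)},w^{(2)}:\mathbb N_0\to\mathbb C$ satisfy the discrete Pearson equations $\theta(k+1)w^{(a)}(k+1)=\sigma^{(a)}(k)w^{(a)}(k)$ for all $k\in\mathbb N_0$ and $a\in\{1,2\}$, where $\theta,\sigma^{(1)},\sigma^{(2)}$ are polynomials with $\theta(0)=0$. Then the moment matrix satisfies \[ \theta(\Lambda)\mathscr M=L\,\mathscr M\left(L^{(1)}\sigma^{(1)}(\Lambda^{(1)})+L^{(2)}\sigma^{(2)}(\Lambda^{(2)})\right)^\top. \]
   Context: Let $X(x)=(1,x,x^2,\dots)^\top$, $X^{(1)}(x)=(1,0,x,0,x^2,0,\dots)^\top$, $X^{(2)}(x)=(0,1,0,x,0,x^2,\dots)^\top$. The moment matrix is the semi-infinite matrix $\mathscr M=\sum_{k=0}^\infty X(k)\big(w^{(1)}(k)X^{(1)}(k)+w^{(2)}(k)X^{(2)}(k)\big)^\top$ (all series assumed absolutely convergent). $\Lambda$ is the semi-infinite matrix with ones on the first superdiagonal and zeros elsewhere; $I^{(1)}=\operatorname{diag}(1,0,1,0,\dots)$, $I^{(2)}=\operatorname{diag}(0,1,0,1,\dots)$, $\Lambda^{(a)}=\Lambda^2I^{(a)}$. $L$ is the lower triangular Pascal matrix, $L_{n,m}=\binom nm$ for $n\ge m$ and $0$ otherwise (indices from $0$). For $a\in\{1,2\}$, $L^{(a)}$ is the semi-infinite matrix whose only nonzero entries are $L^{(a)}_{2n+a-1,2m+a-1}=\binom nm$ for $n\ge m\ge0$. *)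

(* Defs.v *)
From Stdlib Require Import Reals List Bool.
From Coquelicot Require Import Coquelicot.
Import ListNotations.
Open Scope C_scope.
Open Scope bool_scope.

(* Sum of a complex series (real and imaginary parts summed separately);
   equal to the usual sum whenever the series converges. *)
Definition csum (a : nat -> C) : C :=
  (Series (fun k => Re (a k)), Series (fun k => Im (a k))).

Fixpoint cpow (x : C) (n : nat) : C :=
  match n with O => 1 | S n => x * cpow x n end.

(* polynomials with complex coefficients as coefficient lists [c0; c1; ...] *)
Definition cpoly := list C.
Fixpoint peval (p : cpoly) (x : C) : C :=
  match p with [] => 0 | c :: q => c + x * peval q x end.

(* semi-infinite matrices, indices from 0 *)
Definition smat := nat -> nat -> C.
Definition smul (A B : smat) : smat := fun n m => csum (fun j => A n j * B j m).
Definition sadd (A B : smat) : smat := fun n m => A n m + B n m.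
Definition sscale (c : C) (A : smat) : smat := fun n m => c * A n m.
Definition strans (A : smat) : smat := fun n m => A m n.
Definition sid : smat := fun n m => if Nat.eqb n m then 1 else 0.
Definition szero : smat := fun _ _ => 0.
Fixpoint spow (A : smat) (k : nat) : smat :=
  match k with O => sid | S k => smul A (spow A k) end.
Fixpoint speval_aux (p : cpoly) (A : smat) (i : nat) : smat :=
  match p with [] => szero | c :: q => sadd (sscale c (spow A i)) (speval_aux q A (S i)) end.
Definition speval (p : cpoly) (A : smat) : smat := speval_aux p A 0.

Definition Xv (x : C) (n : nat) : C := cpow x n.
Definition X1v (x : C) (n : nat) : C := if Nat.even n then cpow x (Nat.div2 n) else 0.
Definition X2v (x : C) (n : nat) : C := if Nat.even n then 0 else cpow x (Nat.div2 n).

Definition natC (k : nat) : C := RtoC (INR k).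

Definition moment_term (w1 w2 : nat -> C) (n m k : nat) : C :=
  Xv (natC k) n * (w1 k * X1v (natC k) m + w2 k * X2v (natC k) m).
Definition moment (w1 w2 : nat -> C) : smat :=
  fun n m => csum (moment_term w1 w2 n m).

Definition Lam : smat := fun n m => if Nat.eqb m (S n) then 1 else 0.
Definition I1 : smat := fun n m => if Nat.eqb n m && Nat.even n then 1 else 0.
Definition I2 : smat := fun n m => if Nat.eqb n m && negb (Nat.even n) then 1 else 0.
Definition Lam1 : smat := smul (spow Lam 2) I1.
Definition Lam2 : smat := smul (spow Lam 2) I2.

Definition binC (n m : nat) : C := RtoC (Binomial.C n m).
Definition Pascal : smat := fun n m => if Nat.leb m n then binC n m else 0.
Definition Pascal1 : smat := fun i j =>
  if Nat.even i && Nat.even j && Nat.leb j i then binC (Nat.div2 i) (Nat.div2 j) else 0.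
Definition Pascal2 : smat := fun i j =>
  if negb (Nat.even i) && negb (Nat.even j) && Nat.leb j i
  then binC (Nat.div2 i) (Nat.div2 j) else 0.

(* Main.v *)
Require Import Defs.
From Stdlib Require Import Reals List Lia Lra FunctionalExtensionality.
From Coquelicot Require Import Coquelicot.
Open Scope C_scope.

Implicit Types (a b g u v : nat -> C).

Fixpoint fsum (a : nat -> C) (N : nat) : C :=
  match N with O => 0 | S N => fsum a N + a N end.

Lemma fsum_ext a b N : (forall j, (j < N)%nat -> a j = b j) -> fsum a N = fsum b N.
Proof. induction N; simpl; intros H; auto. rewrite IHN by (intros; apply H; lia). rewrite H by lia. auto. Qed.

Lemma fsum_plus a b N : fsum (fun j => a j + b j) N = fsum a N + fsum b N.
Proof. induction N; simpl. ring. rewrite IHN. ring. Qed.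

Lemma fsum_scal c a N : fsum (fun j => c * a j) N = c * fsum a N.
Proof. induction N; simpl. ring. rewrite IHN. ring. Qed.

Lemma fsum_zero a N : (forall j, (j < N)%nat -> a j = 0) -> fsum a N = 0.
Proof. induction N; simpl; intros H; auto. rewrite IHN, H by (intros; try apply H; lia). ring. Qed.

Lemma fsum_shift a N : fsum a (S N) = a 0%nat + fsum (fun j => a (S j)) N.
Proof. induction N. simpl. ring. change (fsum a (S (S N))) with (fsum a (S N) + a (S N)).
rewrite IHN. simpl. ring. Qed.

Lemma fsum_extend a N M : (forall j, (N <= j)%nat -> a j = 0) -> (N <= M)%nat -> fsum a M = fsum a N.
Proof. intros H HM. induction HM; auto. simpl. rewrite IHHM, H by lia. ring. Qed.

Lemma fsum_single a N i : (i < N)%nat -> (forall j, j <> i -> a j = 0) -> fsum a N = a i.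
Proof. intros Hi H. induction N. lia. simpl. destruct (Nat.eq_dec i N).
 subst. rewrite fsum_zero. ring. intros; apply H; lia.
 rewrite IHN by lia. rewrite (H N) by lia. ring. Qed.

Lemma fsum_swap (f : nat -> nat -> C) N M :
  fsum (fun i => fsum (fun j => f i j) M) N = fsum (fun j => fsum (fun i => f i j) N) M.
Proof. induction N; simpl. rewrite fsum_zero; auto. rewrite IHN. rewrite <- fsum_plus. auto. Qed.

Lemma fsum_double g M : fsum g (2 * M) = fsum (fun t => g (2 * t)%nat + g (2 * t + 1)%nat) M.
Proof. induction M. auto. replace (2 * S M)%nat with (S (S (2 * M))) by lia.
 change (fsum g (S (S (2*M)))) with (fsum g (2*M) + g (2*M)%nat + g (S (2*M))).
 change (fsum (fun t : nat => g (2 * t)%nat + g (2 * t + 1)%nat) (S M)) with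
  (fsum (fun t : nat => g (2 * t)%nat + g (2 * t + 1)%nat) M + (g (2 * M)%nat + g (2 * M + 1)%nat)).
 rewrite <- IHM. replace (2 * M + 1)%nat with (S (2 * M)) by lia. ring. Qed.

Definition conv (a : nat -> C) := ex_series (fun k => Re (a k)) /\ ex_series (fun k => Im (a k)).

Lemma conv_Cmod a : ex_series (fun k => Cmod (a k)) -> conv a.
Proof. intros H. split.
 - apply (@ex_series_le R_AbsRing R_CompleteNormedModule (fun k => _) (fun k => Cmod (a k))); [|exact H]. intros n. apply re_le_Cmod.
 - apply (@ex_series_le R_AbsRing R_CompleteNormedModule (fun k => _) (fun k => Cmod (a k))); [|exact H]. intros n. eapply Rle_trans; [|apply Rmax_Cmod]. apply Rmax_r.
Qed.

Lemma conv_ext a b : (forall k, a k = b k) -> conv a -> conv b.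
Proof. intros H [H1 H2]. split; [eapply ex_series_ext; [|exact H1] | eapply ex_series_ext; [|exact H2]]; intros; simpl; rewrite H; auto. Qed.

Lemma conv_plus a b : conv a -> conv b -> conv (fun k => a k + b k).
Proof. intros [H1 H2] [H3 H4]. split; simpl.
 apply (ex_series_plus (V:=R_NormedModule) _ _ H1 H3).
 apply (ex_series_plus (V:=R_NormedModule) _ _ H2 H4). Qed.

Lemma conv_scal c a : conv a -> conv (fun k => c * a k).
Proof. intros [H1 H2]. split; simpl.
 - apply (ex_series_minus (V:=R_NormedModule) (fun k => Re c * Re (a k))%R (fun k => Im c * Im (a k))%R).
   apply (ex_series_scal_l (V:=R_NormedModule) _ _ H1). apply (ex_series_scal_l (V:=R_NormedModule) _ _ H2).
 - apply (ex_series_plus (V:=R_NormedModule) (fun k => Re c * Im (a k))%R (fun k => Im c * Re (a k))%R).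
   apply (ex_series_scal_l (V:=R_NormedModule) _ _ H2). apply (ex_series_scal_l (V:=R_NormedModule) _ _ H1).
Qed.

Lemma conv_zero : conv (fun _ => 0).
Proof. assert (H : ex_series (fun _ : nat => 0%R)).
 { eapply ex_series_ext; [|apply (ex_series_scal_l (V:=R_NormedModule) 0%R _ (ex_series_geom 0%R ltac:(rewrite Rabs_R0; lra)))].
   intros; simpl. unfold scal; simpl; unfold mult; simpl; ring. }
 split; exact H. Qed.

Lemma conv_fsum (f : nat -> nat -> C) N : (forall i, conv (f i)) -> conv (fun k => fsum (fun i => f i k) N).
Proof. intros H. induction N; simpl. apply conv_zero. apply conv_plus; auto. Qed.

Lemma csum_ext a b : (forall k, a k = b k) -> csum a = csum b.
Proof. intros H. unfold csum. f_equal; apply Series_ext; intros; rewrite H; auto. Qed.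

Lemma csum_plus a b : conv a -> conv b -> csum (fun k => a k + b k) = csum a + csum b.
Proof. intros [H1 H2] [H3 H4]. unfold csum. simpl. unfold Cplus; simpl. f_equal.
 apply (Series_plus (fun k => Re (a k)) (fun k => Re (b k))); auto.
 apply (Series_plus (fun k => Im (a k)) (fun k => Im (b k))); auto. Qed.

Lemma csum_scal c a : conv a -> csum (fun k => c * a k) = c * csum a.
Proof. intros [H1 H2]. unfold csum. simpl. unfold Cmult; simpl. f_equal.
 - rewrite (Series_minus (fun k => fst c * fst (a k))%R (fun k => snd c * snd (a k))%R).
   rewrite !Series_scal_l. auto.
   apply (ex_series_scal_l (V:=R_NormedModule) _ _ H1). apply (ex_series_scal_l (V:=R_NormedModule) _ _ H2).
 - rewrite (Series_plus (fun k => fst c * snd (a k))%R (fun k => snd c * fst (a k))%R).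
   rewrite !Series_scal_l. auto.
   apply (ex_series_scal_l (V:=R_NormedModule) _ _ H2). apply (ex_series_scal_l (V:=R_NormedModule) _ _ H1).
Qed.

Lemma Series_fin (a : nat -> R) N l : (forall n, (N <= n)%nat -> sum_n a n = l) -> Series a = l.
Proof. intros H. apply is_series_unique. unfold is_series.
 apply (filterlim_ext_loc (fun _ => l)). exists N. intros; symmetry; apply H; auto.
 apply filterlim_const. Qed.

Lemma csum_fin a N : (forall j, (N <= j)%nat -> a j = 0) -> csum a = fsum a N.
Proof. intros H.
 assert (HR : forall n, sum_n (fun k => Re (a k)) n = Re (fsum a (S n))).
 { induction n. rewrite sum_O. simpl. unfold Re, Im; ring. rewrite sum_Sn, IHn. simpl. auto. }
 assert (HI : forall n, sum_n (fun k => Im (a k)) n = Im (fsum a (S n))).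
 { induction n. rewrite sum_O. simpl. unfold Re, Im; ring. rewrite sum_Sn, IHn. simpl. auto. }
 unfold csum. apply injective_projections; simpl.
 - apply (Series_fin _ N). intros n Hn. rewrite HR, (fsum_extend a N (S n)); auto.
 - apply (Series_fin _ N). intros n Hn. rewrite HI, (fsum_extend a N (S n)); auto.
Qed.

Lemma csum_zero : csum (fun _ => 0) = 0.
Proof. rewrite (csum_fin _ 0); auto. Qed.

Lemma csum_fsum (f : nat -> nat -> C) N : (forall i, conv (f i)) ->
  csum (fun k => fsum (fun i => f i k) N) = fsum (fun i => csum (f i)) N.
Proof. intros H. induction N; simpl. apply csum_zero.
 rewrite csum_plus; auto. rewrite IHN; auto. apply conv_fsum; auto. Qed.

Lemma csum_shift a : conv a -> csum a = a 0%nat + csum (fun k => a (S k)).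
Proof. intros [H1 H2]. unfold csum. rewrite (Series_incr_1 _ H1), (Series_incr_1 _ H2).
 unfold Cplus. simpl. auto. Qed.
Lemma fsum_scal_r c ka N : fsum (fun j => ka j * c) N = fsum ka N * c.
Proof. induction N; simpl. ring. rewrite IHN. ring. Qed.

Definition rowfin (c : nat) (A : smat) := forall n j, (n + c < j)%nat -> A n j = 0.
Definition mv (A : smat) (v : nat -> C) (n : nat) := csum (fun j => A n j * v j).

Lemma mv_fsum c A v n N : rowfin c A -> (n + c < N)%nat -> mv A v n = fsum (fun j => A n j * v j) N.
Proof. intros H HN. unfold mv. apply (csum_fin (fun j => A n j * v j) N). intros j Hj. rewrite H by lia. ring. Qed.

Lemma smul_mv A B n m : smul A B n m = mv A (fun j => B j m) n.
Proof. reflexivity. Qed.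

Lemma rowfin_mono c d A : rowfin c A -> (c <= d)%nat -> rowfin d A.
Proof. intros H Hd n j Hj. apply H. lia. Qed.

Lemma rowfin_smul ka kb A B : rowfin ka A -> rowfin kb B -> rowfin (ka + kb) (smul A B).
Proof. intros HA HB n j Hj. rewrite smul_mv, (mv_fsum ka A _ n (n + ka + 1)) by (auto; lia).
 apply fsum_zero. intros l Hl. rewrite HB by lia. ring. Qed.

Lemma rowfin_sadd ka A B : rowfin ka A -> rowfin ka B -> rowfin ka (sadd A B).
Proof. intros HA HB n j Hj. unfold sadd. rewrite HA, HB by lia. ring. Qed.

Lemma rowfin_sscale ka c A : rowfin ka A -> rowfin ka (sscale c A).
Proof. intros HA n j Hj. unfold sscale. rewrite HA by lia. ring. Qed.

Lemma rowfin_szero ka : rowfin ka szero.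
Proof. intros n j _. reflexivity. Qed.

Lemma rowfin_sid : rowfin 0 sid.
Proof. intros n j Hj. unfold sid. destruct (Nat.eqb_spec n j). lia. auto. Qed.

Lemma rowfin_spow c A i : rowfin c A -> rowfin (c * i) (spow A i).
Proof. intros H. induction i; simpl.
 apply (rowfin_mono 0); [apply rowfin_sid|lia].
 apply (rowfin_mono (c + c * i)). apply rowfin_smul; auto. lia. Qed.

Lemma rowfin_speval_aux c A p i : rowfin c A -> rowfin (c * (i + length p)) (speval_aux p A i).
Proof. intros H. revert i. induction p; intros i; simpl.
 apply rowfin_szero.
 apply rowfin_sadd. apply rowfin_sscale. apply (rowfin_mono (c * i)). apply rowfin_spow; auto. nia.
 apply (rowfin_mono (c * (S i + length p))). auto. nia. Qed.

Lemma rowfin_speval c A p : rowfin c A -> rowfin (c * length p) (speval p A).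
Proof. intros H. apply (rowfin_speval_aux c A p 0 H). Qed.

Lemma mv_ext A u v n : (forall j, u j = v j) -> mv A u n = mv A v n.
Proof. intros H. unfold mv. apply csum_ext. intros; rewrite H; auto. Qed.

Lemma mv_smul ka kb A B v n : rowfin ka A -> rowfin kb B -> mv (smul A B) v n = mv A (mv B v) n.
Proof. intros HA HB. set (K := (n + ka + kb + 1)%nat).
 rewrite (mv_fsum (ka + kb) _ _ n K) by (try apply rowfin_smul; auto; lia).
 rewrite (mv_fsum ka _ _ n K) by (auto; lia).
 rewrite (fsum_ext (fun l => A n l * mv B v l) (fun l => fsum (fun j => A n l * (B l j * v j)) K)).
 2:{ intros l Hl. rewrite fsum_scal. destruct (Compare_dec.le_lt_dec l (n + ka)).
     rewrite (mv_fsum kb _ _ l K) by (auto; lia). auto. rewrite HA by lia. ring. }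
 rewrite fsum_swap. apply fsum_ext. intros j Hj.
 rewrite smul_mv, (mv_fsum ka _ _ n K) by (auto; lia). rewrite <- fsum_scal_r.
 apply fsum_ext. intros; ring. Qed.

Lemma mv_sadd ka A B v n : rowfin ka A -> rowfin ka B -> mv (sadd A B) v n = mv A v n + mv B v n.
Proof. intros HA HB. rewrite !(mv_fsum ka _ _ n (n + ka + 1)) by (try apply rowfin_sadd; auto; lia).
 rewrite <- fsum_plus. apply fsum_ext. intros; unfold sadd; ring. Qed.

Lemma mv_sscale ka c A v n : rowfin ka A -> mv (sscale c A) v n = c * mv A v n.
Proof. intros HA. rewrite !(mv_fsum ka _ _ n (n + ka + 1)) by (try apply rowfin_sscale; auto; lia).
 rewrite <- fsum_scal. apply fsum_ext. intros; unfold sscale; ring. Qed.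

Lemma mv_szero v n : mv szero v n = 0.
Proof. rewrite (mv_fsum 0 _ _ n (n + 1)) by (try apply rowfin_szero; lia). apply fsum_zero. intros; unfold szero; ring. Qed.

Lemma mv_lin ka A c1 c2 u v n : rowfin ka A ->
  mv A (fun j => c1 * u j + c2 * v j) n = c1 * mv A u n + c2 * mv A v n.
Proof. intros HA. rewrite !(mv_fsum ka _ _ n (n + ka + 1)) by (auto; lia).
 rewrite <- !fsum_scal, <- fsum_plus. apply fsum_ext. intros; ring. Qed.

Lemma mv_scalv ka A c u n : rowfin ka A -> mv A (fun j => c * u j) n = c * mv A u n.
Proof. intros HA. rewrite !(mv_fsum ka _ _ n (n + ka + 1)) by (auto; lia).
 rewrite <- !fsum_scal. apply fsum_ext. intros; ring. Qed.

Lemma mv_sid v n : mv sid v n = v n.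
Proof. rewrite (mv_fsum 0 _ _ n (n + 1)) by (try apply rowfin_sid; lia).
 rewrite (fsum_single _ _ n); [| lia | intros j Hj; unfold sid; destruct (Nat.eqb_spec n j); [lia|ring]].
 unfold sid. rewrite Nat.eqb_refl. ring. Qed.

Lemma mv_spow_eig ka A v lam i n : rowfin ka A -> (forall n, mv A v n = lam * v n) ->
  mv (spow A i) v n = cpow lam i * v n.
Proof. intros HA Hv. revert n. induction i; intros n; simpl.
 rewrite mv_sid. ring.
 rewrite (mv_smul ka (ka * i)) by (auto; apply rowfin_spow; auto).
 rewrite (mv_ext _ _ (fun j => cpow lam i * v j)) by auto.
 rewrite (mv_scalv ka) by auto. rewrite Hv. ring. Qed.

Lemma mv_speval_aux_eig ka A v lam p i n : rowfin ka A -> (forall n, mv A v n = lam * v n) ->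
  mv (speval_aux p A i) v n = cpow lam i * peval p lam * v n.
Proof. intros HA Hv. revert i. induction p as [|c0 p IHp]; intros i; simpl.
 rewrite mv_szero. ring.
 rewrite (mv_sadd (ka * (i + length (c0 :: p)))).
 rewrite (mv_sscale (ka * i)) by (apply rowfin_spow; auto).
 rewrite (mv_spow_eig ka A v lam) by auto. rewrite IHp. simpl. ring.
 apply rowfin_sscale. apply (rowfin_mono (ka * i)). apply rowfin_spow; auto. simpl; nia.
 apply (rowfin_mono (ka * (S i + length p))). apply rowfin_speval_aux; auto. simpl; nia. Qed.

Lemma mv_speval_eig ka A v lam p n : rowfin ka A -> (forall n, mv A v n = lam * v n) ->
  mv (speval p A) v n = peval p lam * v n.
Proof. intros. unfold speval. rewrite (mv_speval_aux_eig ka A v lam) by auto. simpl. ring. Qed.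

Lemma rowfin_Lam : rowfin 1 Lam.
Proof. intros n j Hj. unfold Lam. destruct (Nat.eqb_spec j (S n)). lia. auto. Qed.

Lemma mv_Lam v n : mv Lam v n = v (S n).
Proof. rewrite (mv_fsum 1 _ _ n (n + 2)) by (try apply rowfin_Lam; lia).
 rewrite (fsum_single _ _ (S n)); [| lia | intros j Hj; unfold Lam; destruct (Nat.eqb_spec j (S n)); [lia|ring]].
 unfold Lam. rewrite Nat.eqb_refl. ring. Qed.

Lemma rowfin_I1 : rowfin 0 I1.
Proof. intros n j Hj. unfold I1. destruct (Nat.eqb_spec n j). lia. auto. Qed.
Lemma rowfin_I2 : rowfin 0 I2.
Proof. intros n j Hj. unfold I2. destruct (Nat.eqb_spec n j). lia. auto. Qed.

Lemma mv_I1 v n : mv I1 v n = if Nat.even n then v n else 0.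
Proof. rewrite (mv_fsum 0 _ _ n (n + 1)) by (try apply rowfin_I1; lia).
 rewrite (fsum_single _ _ n); [| lia | intros j Hj; unfold I1; destruct (Nat.eqb_spec n j); [lia|simpl; ring]].
 unfold I1. rewrite Nat.eqb_refl. simpl. destruct (Nat.even n); ring. Qed.
Lemma mv_I2 v n : mv I2 v n = if Nat.even n then 0 else v n.
Proof. rewrite (mv_fsum 0 _ _ n (n + 1)) by (try apply rowfin_I2; lia).
 rewrite (fsum_single _ _ n); [| lia | intros j Hj; unfold I2; destruct (Nat.eqb_spec n j); [lia|simpl; ring]].
 unfold I2. rewrite Nat.eqb_refl. simpl. destruct (Nat.even n); simpl; ring. Qed.

Lemma rowfin_Lam2pow : rowfin 2 (spow Lam 2).
Proof. apply (rowfin_spow 1 Lam 2 rowfin_Lam). Qed.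

Lemma mv_Lam2pow v n : mv (spow Lam 2) v n = v (S (S n)).
Proof. simpl. rewrite (mv_smul 1 1); [| apply rowfin_Lam | apply (rowfin_smul 1 0); [apply rowfin_Lam|apply rowfin_sid]].
 rewrite mv_Lam. rewrite (mv_smul 1 0); [| apply rowfin_Lam | apply rowfin_sid].
 rewrite mv_Lam. apply mv_sid. Qed.

Lemma rowfin_Lam1 : rowfin 2 Lam1.
Proof. apply (rowfin_mono (2 + 0)). apply rowfin_smul. apply rowfin_Lam2pow. apply rowfin_I1. lia. Qed.
Lemma rowfin_Lam2 : rowfin 2 Lam2.
Proof. apply (rowfin_mono (2 + 0)). apply rowfin_smul. apply rowfin_Lam2pow. apply rowfin_I2. lia. Qed.

Lemma mv_Lam1 v n : mv Lam1 v n = if Nat.even n then v (S (S n)) else 0.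
Proof. unfold Lam1. rewrite (mv_smul 2 0) by (try apply rowfin_Lam2pow; apply rowfin_I1).
 rewrite mv_Lam2pow, mv_I1. reflexivity. Qed.
Lemma mv_Lam2 v n : mv Lam2 v n = if Nat.even n then 0 else v (S (S n)).
Proof. unfold Lam2. rewrite (mv_smul 2 0) by (try apply rowfin_Lam2pow; apply rowfin_I2).
 rewrite mv_Lam2pow, mv_I2. reflexivity. Qed.

Lemma Lam1_X1 x n : mv Lam1 (X1v x) n = x * X1v x n.
Proof. rewrite mv_Lam1. unfold X1v. simpl. destruct (Nat.even n); simpl; ring. Qed.
Lemma Lam1_X2 x n : mv Lam1 (X2v x) n = 0 * X2v x n.
Proof. rewrite mv_Lam1. unfold X2v. simpl. destruct (Nat.even n); simpl; ring. Qed.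
Lemma Lam2_X2 x n : mv Lam2 (X2v x) n = x * X2v x n.
Proof. rewrite mv_Lam2. unfold X2v. simpl. destruct (Nat.even n); simpl; ring. Qed.
Lemma Lam2_X1 x n : mv Lam2 (X1v x) n = 0 * X1v x n.
Proof. rewrite mv_Lam2. unfold X1v. simpl. destruct (Nat.even n); simpl; ring. Qed.

Lemma Lam_X x n : mv Lam (Xv x) n = x * Xv x n.
Proof. rewrite mv_Lam. reflexivity. Qed.

Lemma rowfin_Pascal : rowfin 0 Pascal.
Proof. intros n j Hj. unfold Pascal. destruct (Nat.leb_spec j n). lia. auto. Qed.
Lemma rowfin_Pascal1 : rowfin 0 Pascal1.
Proof. intros n j Hj. unfold Pascal1. destruct (Nat.leb_spec j n). lia. rewrite Bool.andb_false_r. auto. Qed.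
Lemma rowfin_Pascal2 : rowfin 0 Pascal2.
Proof. intros n j Hj. unfold Pascal2. destruct (Nat.leb_spec j n). lia. rewrite Bool.andb_false_r. auto. Qed.

Lemma Pascal_0 n : Pascal n 0%nat = 1.
Proof. unfold Pascal, binC. simpl. rewrite C_n_0. auto. Qed.

Lemma Pascal_S n j : Pascal (S n) (S j) = Pascal n j + Pascal n (S j).
Proof. unfold Pascal, binC. destruct (Nat.lt_total j n) as [H|[H|H]].
 - replace (Nat.leb (S j) (S n)) with true by (symmetry; apply Nat.leb_le; lia).
   replace (Nat.leb j n) with true by (symmetry; apply Nat.leb_le; lia).
   replace (Nat.leb (S j) n) with true by (symmetry; apply Nat.leb_le; lia).
   rewrite <- pascal by auto. rewrite RtoC_plus. auto.
 - subst n. rewrite !Nat.leb_refl. replace (Nat.leb (S j) j) with false by (symmetry; apply Nat.leb_gt; lia).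
   rewrite !C_n_n. ring.
 - replace (Nat.leb (S j) (S n)) with false by (symmetry; apply Nat.leb_gt; lia).
   replace (Nat.leb j n) with false by (symmetry; apply Nat.leb_gt; lia).
   replace (Nat.leb (S j) n) with false by (symmetry; apply Nat.leb_gt; lia). ring. Qed.

Lemma binom n : forall N x, (n < N)%nat -> fsum (fun j => Pascal n j * cpow x j) N = cpow (x + 1) n.
Proof. induction n; intros N x HN.
 - rewrite (fsum_single _ _ 0%nat); [| lia | intros j Hj; unfold Pascal; destruct (Nat.leb_spec j 0%nat); [lia|ring]].
   rewrite Pascal_0. simpl. ring.
 - destruct N as [|N]. lia. rewrite fsum_shift.
   rewrite (fsum_ext _ (fun j => x * (Pascal n j * cpow x j) + Pascal n (S j) * cpow x (S j))).
   2:{ intros j _. rewrite Pascal_S. simpl. ring. }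
   rewrite fsum_plus, fsum_scal, IHn by lia.
   pose proof (IHn (S N) x ltac:(lia)) as E. rewrite fsum_shift in E.
   rewrite !Pascal_0 in *. simpl in *. rewrite <- E. ring. Qed.

Lemma Pascal_X x n : mv Pascal (Xv x) n = Xv (x + 1) n.
Proof. rewrite (mv_fsum 0 _ _ n (n + 1)) by (try apply rowfin_Pascal; lia).
 apply binom. lia. Qed.

Lemma leb_double s t : Nat.leb (2 * s) (2 * t) = Nat.leb s t.
Proof. destruct (Nat.leb_spec s t); [apply Nat.leb_le | apply Nat.leb_gt]; lia. Qed.
Lemma leb_double1 s t : Nat.leb (2 * s + 1) (2 * t + 1) = Nat.leb s t.
Proof. destruct (Nat.leb_spec s t); [apply Nat.leb_le | apply Nat.leb_gt]; lia. Qed.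

Lemma Pascal1_X2 x i : mv Pascal1 (X2v x) i = 0.
Proof. rewrite (mv_fsum 0 _ _ i (i + 1)) by (try apply rowfin_Pascal1; lia).
 apply fsum_zero. intros j _. unfold Pascal1, X2v.
 destruct (Nat.even i), (Nat.even j), (Nat.leb j i); simpl; ring. Qed.
Lemma Pascal2_X1 x i : mv Pascal2 (X1v x) i = 0.
Proof. rewrite (mv_fsum 0 _ _ i (i + 1)) by (try apply rowfin_Pascal2; lia).
 apply fsum_zero. intros j _. unfold Pascal2, X1v.
 destruct (Nat.even i), (Nat.even j), (Nat.leb j i); simpl; ring. Qed.

Lemma Pascal1_X1 x i : mv Pascal1 (X1v x) i = X1v (x + 1) i.
Proof. destruct (Nat.Even_or_Odd i) as [[t ->]|[t ->]].
 - rewrite (mv_fsum 0 _ _ (2 * t) (2 * S t)) by (try apply rowfin_Pascal1; lia).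
   rewrite fsum_double. unfold X1v. rewrite Nat.even_even, Nat.div2_double.
   rewrite <- (binom t (S t) x) by lia. apply fsum_ext. intros s _.
   unfold Pascal1, Pascal. rewrite !Nat.even_even, Nat.even_odd, leb_double, !Nat.div2_double.
   cbn [andb]. destruct (Nat.leb s t); ring.
 - rewrite (mv_fsum 0 _ _ (2 * t + 1) (2 * t + 2)) by (try apply rowfin_Pascal1; lia).
   unfold X1v. rewrite Nat.even_odd. apply fsum_zero. intros j _. unfold Pascal1.
   rewrite Nat.even_odd. cbn [andb]. ring. Qed.

Lemma Pascal2_X2 x i : mv Pascal2 (X2v x) i = X2v (x + 1) i.
Proof. destruct (Nat.Even_or_Odd i) as [[t ->]|[t ->]].
 - rewrite (mv_fsum 0 _ _ (2 * t) (2 * t + 1)) by (try apply rowfin_Pascal2; lia).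
   unfold X2v. rewrite Nat.even_even. apply fsum_zero. intros j _. unfold Pascal2.
   rewrite Nat.even_even. cbn [andb negb]. ring.
 - rewrite (mv_fsum 0 _ _ (2 * t + 1) (2 * S t)) by (try apply rowfin_Pascal2; lia).
   rewrite fsum_double. unfold X2v. rewrite Nat.even_odd, Nat.div2_odd'.
   rewrite <- (binom t (S t) x) by lia. apply fsum_ext. intros s _.
   unfold Pascal2, Pascal. rewrite !Nat.even_even, !Nat.even_odd, leb_double1, !Nat.div2_odd'.
   cbn [andb negb]. destruct (Nat.leb s t); ring. Qed.

Lemma csum_swap_fin (a : nat -> C) (f : nat -> nat -> C) K :
  (forall j, (K <= j)%nat -> a j = 0) -> (forall j, conv (f j)) ->
  csum (fun j => a j * csum (f j)) = csum (fun k => fsum (fun j => a j * f j k) K)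
  /\ conv (fun k => fsum (fun j => a j * f j k) K).
Proof. intros Ha Hf. split.
 - rewrite (csum_fin (fun j => a j * csum (f j)) K) by (intros j Hj; rewrite Ha by auto; ring).
   rewrite (csum_fsum (fun j k => a j * f j k)) by (intros; apply conv_scal; auto).
   apply fsum_ext. intros j _. rewrite csum_scal; auto.
 - apply (conv_fsum (fun j k => a j * f j k)). intros; apply conv_scal; auto. Qed.

Definition Wv (w1 w2 : nat -> C) (k m : nat) : C := w1 k * X1v (natC k) m + w2 k * X2v (natC k) m.

Lemma smul_moment w1 w2 c A n m : (forall n m, conv (moment_term w1 w2 n m)) -> rowfin c A ->
  smul A (moment w1 w2) n m = csum (fun k => mv A (Xv (natC k)) n * Wv w1 w2 k m)
  /\ conv (fun k => mv A (Xv (natC k)) n * Wv w1 w2 k m).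
Proof. intros Hc HA.
 destruct (csum_swap_fin (fun j => A n j) (fun j => moment_term w1 w2 j m) (n + c + 1)) as [E1 E2].
 - intros j Hj. apply HA. lia.
 - intros j. apply Hc.
 - assert (Hp : forall k, fsum (fun j => A n j * moment_term w1 w2 j m k) (n + c + 1)
                 = mv A (Xv (natC k)) n * Wv w1 w2 k m).
   { intros k. rewrite (mv_fsum c _ _ n (n + c + 1)) by (auto; lia). rewrite <- fsum_scal_r.
     apply fsum_ext. intros j _. unfold moment_term, Wv. ring. }
   split.
   + unfold smul at 1. unfold moment. rewrite E1. apply csum_ext. auto.
   + eapply conv_ext; [|exact E2]. auto. Qed.

Lemma natC_S k : natC (S k) = natC k + 1.
Proof. unfold natC. rewrite S_INR, RtoC_plus. auto. Qed.

Lemma B_W (s1 s2 : cpoly) (w1 w2 : nat -> C) k m :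
  mv (sadd (smul Pascal1 (speval s1 Lam1)) (smul Pascal2 (speval s2 Lam2))) (Wv w1 w2 k) m
  = w1 k * peval s1 (natC k) * X1v (natC k + 1) m + w2 k * peval s2 (natC k) * X2v (natC k + 1) m.
Proof.
 assert (R1 : rowfin (2 * length s1) (speval s1 Lam1)) by (apply rowfin_speval, rowfin_Lam1).
 assert (R2 : rowfin (2 * length s2) (speval s2 Lam2)) by (apply rowfin_speval, rowfin_Lam2).
 set (x := natC k).
 rewrite (mv_sadd (2 * (length s1 + length s2))).
 2:{ apply (rowfin_mono (0 + 2 * length s1)). apply rowfin_smul; auto. apply rowfin_Pascal1. lia. }
 2:{ apply (rowfin_mono (0 + 2 * length s2)). apply rowfin_smul; auto. apply rowfin_Pascal2. lia. }
 rewrite (mv_smul 0 (2 * length s1)) by (auto; apply rowfin_Pascal1).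
 rewrite (mv_smul 0 (2 * length s2)) by (auto; apply rowfin_Pascal2).
 rewrite (mv_ext Pascal1 _ (fun j => (w1 k * peval s1 x) * X1v x j + (w2 k * peval s1 0) * X2v x j)).
 2:{ intros j. unfold Wv. fold x. rewrite (mv_lin (2 * length s1)) by auto.
     rewrite (mv_speval_eig 2 Lam1 _ x) by (try apply rowfin_Lam1; apply Lam1_X1).
     rewrite (mv_speval_eig 2 Lam1 _ 0) by (try apply rowfin_Lam1; apply Lam1_X2). ring. }
 rewrite (mv_ext Pascal2 _ (fun j => (w1 k * peval s2 0) * X1v x j + (w2 k * peval s2 x) * X2v x j)).
 2:{ intros j. unfold Wv. fold x. rewrite (mv_lin (2 * length s2)) by auto.
     rewrite (mv_speval_eig 2 Lam2 _ 0) by (try apply rowfin_Lam2; apply Lam2_X1).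
     rewrite (mv_speval_eig 2 Lam2 _ x) by (try apply rowfin_Lam2; apply Lam2_X2). ring. }
 rewrite !(mv_lin 0) by (apply rowfin_Pascal1 || apply rowfin_Pascal2).
 rewrite Pascal1_X1, Pascal1_X2, Pascal2_X1, Pascal2_X2. ring. Qed.

Theorem mainTheorem5 (w1 w2 : nat -> C) (theta sigma1 sigma2 : cpoly) :
  (forall n m : nat, ex_series (fun k => Cmod (moment_term w1 w2 n m k))) ->
  peval theta 0 = 0 ->
  (forall k : nat, peval theta (natC (S k)) * w1 (S k) = peval sigma1 (natC k) * w1 k) ->
  (forall k : nat, peval theta (natC (S k)) * w2 (S k) = peval sigma2 (natC k) * w2 k) ->
  smul (speval theta Lam) (moment w1 w2) =
  smul (smul Pascal (moment w1 w2))
    (strans (sadd (smul Pascal1 (speval sigma1 Lam1))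
                  (smul Pascal2 (speval sigma2 Lam2)))).
Proof.
 intros Hm Ht0 H1 H2.
 assert (Hc : forall n m, conv (moment_term w1 w2 n m)) by (intros; apply conv_Cmod; auto).
 set (B := sadd (smul Pascal1 (speval sigma1 Lam1)) (smul Pascal2 (speval sigma2 Lam2))).
 assert (RB : rowfin (2 * (length sigma1 + length sigma2)) B).
 { apply rowfin_sadd.
   apply (rowfin_mono (0 + 2 * length sigma1)). apply rowfin_smul. apply rowfin_Pascal1.
   apply rowfin_speval, rowfin_Lam1. lia.
   apply (rowfin_mono (0 + 2 * length sigma2)). apply rowfin_smul. apply rowfin_Pascal2.
   apply rowfin_speval, rowfin_Lam2. lia. }
 apply functional_extensionality; intros n. apply functional_extensionality; intros m.
 destruct (smul_moment w1 w2 (1 * length theta) (speval theta Lam) n m Hc) as [EL CL].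
 { apply rowfin_speval, rowfin_Lam. }
 rewrite EL.
 assert (HL : forall k, mv (speval theta Lam) (Xv (natC k)) n * Wv w1 w2 k m
                = peval theta (natC k) * Xv (natC k) n * Wv w1 w2 k m).
 { intros k. rewrite (mv_speval_eig 1 Lam _ (natC k)) by (try apply rowfin_Lam; apply Lam_X). auto. }
 rewrite (csum_ext _ _ HL). apply (conv_ext _ _ HL) in CL.
 rewrite (csum_shift _ CL).
 replace (natC 0) with (RtoC 0) by (unfold natC; simpl; auto). rewrite Ht0.
 unfold smul at 1. unfold strans.
 assert (HP : forall j, smul Pascal (moment w1 w2) n j = csum (fun k => Xv (natC k + 1) n * Wv w1 w2 k j)
              /\ conv (fun k => Xv (natC k + 1) n * Wv w1 w2 k j)).
 { intros j. destruct (smul_moment w1 w2 0 Pascal n j Hc rowfin_Pascal) as [E C0].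
   assert (HX : forall k, mv Pascal (Xv (natC k)) n * Wv w1 w2 k j = Xv (natC k + 1) n * Wv w1 w2 k j).
   { intros k. rewrite Pascal_X. auto. }
   split. rewrite E. apply csum_ext. auto. eapply conv_ext; [|exact C0]. auto. }
 rewrite (csum_ext (fun j => smul Pascal (moment w1 w2) n j * B m j) (fun j => B m j * csum (fun k => Xv (natC k + 1) n * Wv w1 w2 k j))).
 2:{ intros j. rewrite (proj1 (HP j)). ring. }
 destruct (csum_swap_fin (fun j => B m j) (fun j k => Xv (natC k + 1) n * Wv w1 w2 k j)
            (m + 2 * (length sigma1 + length sigma2) + 1)) as [E1 _].
 { intros j Hj. apply RB. lia. } { intros j. apply (proj2 (HP j)). }
 rewrite E1. clear E1.
 rewrite (csum_ext (fun k => fsum (fun j => B m j * (Xv (natC k + 1) n * Wv w1 w2 k j)) (m + 2 * (length sigma1 + length sigma2) + 1)) (fun k => Xv (natC k + 1) n * mv B (Wv w1 w2 k) m)).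
 2:{ intros k. rewrite (mv_fsum _ _ _ m (m + 2 * (length sigma1 + length sigma2) + 1) RB) by lia.
     rewrite <- fsum_scal. apply fsum_ext. intros; ring. }
 unfold B. rewrite Cmult_0_l, Cmult_0_l, Cplus_0_l.
 apply csum_ext. intros k. rewrite B_W. unfold Wv. rewrite <- natC_S.
 transitivity (Xv (natC (S k)) n * ((peval theta (natC (S k)) * w1 (S k)) * X1v (natC (S k)) m
    + (peval theta (natC (S k)) * w2 (S k)) * X2v (natC (S k)) m)). ring.
 rewrite H1, H2. ring.
Qed.
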